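(* Let $A$ be a group with finite presentation $\langle\mathcal A:\mathcal R\rangle$, $\phi:F(\mathcal A)\to F(\mathcal A)$ a homomorphism inducing a monomorphism of $A$, and $G$ the ascending HNN extension with presentation $\mathcal P=\langle t,\mathcal A:\mathcal R,\ t^{-1}at=\phi(a)\ (a\in\mathcal A)\rangle$ (stable letter $t$, base $A$). Let $X$ be the Cayley 2-complex of $\mathcal P$. If $M,N\ge0$ are integers and $\alpha$ is a loop in $X-t^NA\cdot Q(M)$, where $t^NA\cdot Q(M)=\{t^Nat^{-m}:a\in A,\ 0\le m\le M\}$ ($=(t^NAt^{-N})\cdot t^N\{1,t^{-1},\dots,t^{-M}\}$), then $\alpha$ is homotopically trivial in $X-t^NA\cdot Q(M)$.
   Context: $\mathcal A$ is finite, $\mathcal R\subset F(\mathcal A)$ finite. The Cayley 2-complex $X$ is the simply connected 2-complex with vertex set $G$, 1-skeleton the Cayley graph of $G$ with respect to $\mathcal A\cup\{t\}$, and a 2-cell at each vertex for each relator of $\mathcal P$. $X-S$ denotes the complement in $X$ of the vertex set $S$. *)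

(* Defs.v *)
From mathcomp Require Import all_boot.
Set Implicit Arguments. Unset Strict Implicit. Unset Printing Implicit Defensive.

(* A letter is a generator together with a flag: [false] = x, [true] = x^-1. *)
Definition letter (T : Type) := (T * bool)%type.
Definition word (T : Type) := seq (letter T).

Definition invl {T : Type} (x : letter T) : letter T := (x.1, ~~ x.2).
Definition invw {T : Type} (w : word T) : word T := rev (map invl w).

Inductive pres_eq {T : eqType} (rels : seq (word T)) : word T -> word T -> Prop :=
| pe_refl u : pres_eq rels u u
| pe_sym u v : pres_eq rels u v -> pres_eq rels v u
| pe_trans u v w : pres_eq rels u v -> pres_eq rels v w -> pres_eq rels u w
| pe_free u v x : pres_eq rels (u ++ [:: x; invl x] ++ v) (u ++ v)
| pe_rel u v r : r \in rels -> pres_eq rels (u ++ r ++ v) (u ++ v).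

Definition hom_word {T : Type} (phi : T -> word T) (w : word T) : word T :=
  flatten (map (fun x : letter T => if x.2 then invw (phi x.1) else phi x.1) w).

Definition induces_mono {T : eqType} (R : seq (word T)) (phi : T -> word T) : Prop :=
  (forall u v, pres_eq R u v -> pres_eq R (hom_word phi u) (hom_word phi v)) /\
  (forall u v, pres_eq R (hom_word phi u) (hom_word phi v) -> pres_eq R u v).

(* Generators of the HNN presentation: [None] is the stable letter t,
   [Some a] is a in the generating set of A. *)
Definition hgen (T : Type) := option T.
Definition liftw {T : Type} (w : word T) : word (hgen T) :=
  map (fun x : letter T => (Some x.1, x.2)) w.

Definition hnn_rels {T : finType} (R : seq (word T)) (phi : T -> word T)
  : seq (word (hgen T)) :=
  map liftw R ++
  [seq [:: (None, true); (Some a, false); (None, false)] ++ invw (liftw (phi a))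
  | a <- enum T].

Definition geq {T : finType} (R : seq (word T)) (phi : T -> word T) :=
  pres_eq (hnn_rels R phi).

Definition tpow {T : Type} (n : nat) (inv : bool) : word (hgen T) :=
  nseq n (None, inv).

Definition in_S {T : finType} (R : seq (word T)) (phi : T -> word T)
  (M N : nat) (g : word (hgen T)) : Prop :=
  exists (a : word T) (m : nat), m <= M /\
    geq R phi g (tpow N false ++ liftw a ++ tpow m true).

(* Boundary words of 2-cells of the Cayley complex read from any of their
   vertices, in either orientation. *)
Definition face_word {T : finType} (R : seq (word T)) (phi : T -> word T)
  (u : word (hgen T)) : Prop :=
  exists (r : word (hgen T)) (k : nat),
    (r \in hnn_rels R phi \/ invw r \in hnn_rels R phi) /\
    u = rot k r.

(* Elementary combinatorial homotopies of an edge path starting at vertex g,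
   staying inside X - S: removal of a backtrack whose tip avoids S, and
   removal of the boundary of a 2-cell all of whose vertices avoid S. *)
Inductive htpy_step {T : finType} (R : seq (word T)) (phi : T -> word T)
  (S : word (hgen T) -> Prop) (g : word (hgen T))
  : word (hgen T) -> word (hgen T) -> Prop :=
| hs_back u v x : ~ S (g ++ u ++ [:: x]) ->
    htpy_step R phi S g (u ++ [:: x; invl x] ++ v) (u ++ v)
| hs_face u v r : face_word R phi r ->
    (forall k, k <= size r -> ~ S (g ++ u ++ take k r)) ->
    htpy_step R phi S g (u ++ r ++ v) (u ++ v).

Inductive htpy {T : finType} (R : seq (word T)) (phi : T -> word T)
  (S : word (hgen T) -> Prop) (g : word (hgen T))
  : word (hgen T) -> word (hgen T) -> Prop :=
| ht_refl w : htpy R phi S g w w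
| ht_step w1 w2 : htpy_step R phi S g w1 w2 -> htpy R phi S g w1 w2
| ht_sym w1 w2 : htpy R phi S g w1 w2 -> htpy R phi S g w2 w1
| ht_trans w1 w2 w3 : htpy R phi S g w1 w2 -> htpy R phi S g w2 w3 ->
    htpy R phi S g w1 w3.

Definition loop_avoiding {T : finType} (R : seq (word T)) (phi : T -> word T)
  (S : word (hgen T) -> Prop) (g w : word (hgen T)) : Prop :=
  geq R phi (g ++ w) g /\ (forall k, k <= size w -> ~ S (g ++ take k w)).

(* Main.v *)
Require Import Defs.
From mathcomp Require Import all_boot zify.
Set Implicit Arguments. Unset Strict Implicit. Unset Printing Implicit Defensive.

Section PE.
Variables (T : eqType) (rels : seq (word T)).

Lemma invlK (x : letter T) : invl (invl x) = x.
Proof. by case: x => a b; rewrite /invl /= negbK. Qed.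

Lemma invwK (y : word T) : invw (invw y) = y.
Proof.
rewrite /invw map_rev revK -map_comp.
by rewrite (eq_map (g := id)) ?map_id // => x /=; rewrite invlK.
Qed.

Lemma invw_cat (u v : word T) : invw (u ++ v) = invw v ++ invw u.
Proof. by rewrite /invw map_cat rev_cat. Qed.

Lemma invw_cons (x : letter T) y : invw (x :: y) = invw y ++ [:: invl x].
Proof. by rewrite /invw /= rev_cons cats1. Qed.

Lemma pe_ctx a b u v : pres_eq rels u v -> pres_eq rels (a ++ u ++ b) (a ++ v ++ b).
Proof.
elim=> {u v}.
- by move=> u; apply: pe_refl.
- by move=> u v _ H; apply: pe_sym.
- by move=> u v w _ H1 _ H2; apply: pe_trans H2.
- move=> u v x; have := pe_free rels (a ++ u) (v ++ b) x.
  by rewrite -!catA.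
- move=> u v r Hr; have := pe_rel (a ++ u) (v ++ b) Hr.
  by rewrite -!catA.
Qed.

Lemma pe_cancel y : pres_eq rels (y ++ invw y) [::].
Proof.
elim: y => [|x y IH]; first by apply: pe_refl.
rewrite invw_cons cat_cons catA.
apply: (pe_trans (pe_ctx [:: x] [:: invl x] IH)).
exact: (pe_free rels [::] [::] x).
Qed.

Lemma pe_cancel' y : pres_eq rels (invw y ++ y) [::].
Proof. by have := pe_cancel (invw y); rewrite invwK. Qed.

Lemma pe_cancel_ctx a b y : pres_eq rels (a ++ (y ++ invw y) ++ b) (a ++ b).
Proof. by have := pe_ctx a b (pe_cancel y). Qed.

Lemma pe_ctxl a u v : pres_eq rels u v -> pres_eq rels (a ++ u) (a ++ v).
Proof. by move=> H; have := pe_ctx a [::] H; rewrite !cats0. Qed.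

Lemma pe_ctxr b u v : pres_eq rels u v -> pres_eq rels (u ++ b) (v ++ b).
Proof. by move=> H; have := pe_ctx [::] b H. Qed.

Lemma pe_rot u v : pres_eq rels (u ++ v) [::] -> pres_eq rels (v ++ u) [::].
Proof.
move=> H.
apply: (pe_trans (v := v ++ (u ++ v) ++ invw v)).
  apply: pe_sym; rewrite -!catA; have := pe_cancel_ctx (v ++ u) [::] v.
  by rewrite -!catA !cats0.
apply: (pe_trans (v := v ++ [::] ++ invw v)); first exact: pe_ctx.
exact: pe_cancel.
Qed.

Lemma pe_inv x : pres_eq rels x [::] -> pres_eq rels (invw x) [::].
Proof.
move=> H; apply: (pe_trans (v := invw x ++ x)); last exact: pe_cancel'.
by apply: pe_sym; have := pe_ctxl (invw x) H; rewrite cats0.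
Qed.

Lemma pe_mem r : r \in rels -> pres_eq rels r [::].
Proof. by move=> Hr; have := pe_rel [::] [::] Hr; rewrite cats0. Qed.

End PE.

Section NF.
Variables (T : finType) (R : seq (word T)) (phi : T -> word T).
Hypothesis Hphi : induces_mono R phi.

Lemma hom_cat (u v : word T) : hom_word phi (u ++ v) = hom_word phi u ++ hom_word phi v.
Proof. by rewrite /hom_word map_cat flatten_cat. Qed.

Lemma hom_invw (z : word T) : hom_word phi (invw z) = invw (hom_word phi z).
Proof.
elim: z => [|x z IH] //.
rewrite invw_cons hom_cat IH.
by case: x => a [] /=; rewrite /hom_word /= invw_cat ?invwK cats0.
Qed.

Definition homn k (z : word T) := iter k (hom_word phi) z.

Lemma homn_cat k u v : homn k (u ++ v) = homn k u ++ homn k v.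
Proof. by elim: k => [|k IH] //=; rewrite /homn /= -/(homn k _) IH hom_cat. Qed.

Lemma homn_invw k z : homn k (invw z) = invw (homn k z).
Proof. by elim: k => [|k IH] //=; rewrite /homn /= -/(homn k _) IH hom_invw. Qed.

Lemma homn_nil k : homn k [::] = [::].
Proof. by elim: k => [|k IH] //=; rewrite /homn /= -/(homn k _) IH. Qed.

Lemma homnD m n z : homn m (homn n z) = homn (m + n) z.
Proof. by rewrite /homn iterD. Qed.

Lemma homnS n z : homn n (hom_word phi z) = homn n.+1 z.
Proof. by rewrite /homn iterSr. Qed.

Lemma homnS' n z : hom_word phi (homn n z) = homn n.+1 z.
Proof. by rewrite /homn iterS. Qed.

Lemma homn_pe k u v : pres_eq R u v -> pres_eq R (homn k u) (homn k v).
Proof.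
elim: k => [|k IH] // H; rewrite -!homnS'; apply: Hphi.1; exact: IH.
Qed.

Lemma homn_pe_inv k u v : pres_eq R (homn k u) (homn k v) -> pres_eq R u v.
Proof.
elim: k => [|k IH] // H; apply: IH; apply: Hphi.2; by rewrite !homnS'.
Qed.

Definition tau := (nat * word T * nat)%type.

Definition step (x : letter (hgen T)) (s : tau) : tau :=
  let: (i, X, j) := s in
  match x with
  | (None, false) => (i.+1, X, j)
  | (None, true) => if i is i'.+1 then (i', X, j) else (0, hom_word phi X, j.+1)
  | (Some a, b) => (i, homn i [:: (a, b)] ++ X, j)
  end.

Definition nf (w : word (hgen T)) : tau := foldr step (0, [::], 0) w.

Definition E (s s' : tau) : Prop :=
  let: (i, X, j) := s in let: (i', X', j') := s' in
  i + j' = i' + j /\ pres_eq R (homn i' X) (homn i X').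

Lemma E_refl s : E s s.
Proof. by case: s => [[i X] j]; split=> //; apply: pe_refl. Qed.

Lemma E_sym s s' : E s s' -> E s' s.
Proof. by case: s => [[i X] j]; case: s' => [[i' X'] j'] [H1 H2]; split; [lia|apply: pe_sym]. Qed.

Lemma E_trans s1 s2 s3 : E s1 s2 -> E s2 s3 -> E s1 s3.
Proof.
case: s1 => [[i1 X1] j1]; case: s2 => [[i2 X2] j2]; case: s3 => [[i3 X3] j3].
move=> [H1 H2] [H3 H4]; split; first lia.
apply: (homn_pe_inv (k := i2)).
rewrite !homnD.
apply: (pe_trans (v := homn i3 (homn i2 X1))); first by rewrite homnD addnC; apply: pe_refl.
apply: (pe_trans (v := homn i3 (homn i1 X2))); first exact: homn_pe.
rewrite homnD addnC -homnD.
apply: (pe_trans (v := homn i1 (homn i2 X3))); first exact: homn_pe.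
rewrite homnD addnC; exact: pe_refl.
Qed.

Lemma step_E x s s' : E s s' -> E (step x s) (step x s').
Proof.
case: s => [[i X] j]; case: s' => [[i' X'] j'] [H1 H2].
case: x => [[a|] b].
- split=> //; rewrite !homn_cat !homnD addnC.
  apply: (pe_trans (pe_ctxl _ H2)); exact: pe_refl.
- case: b.
  + case: i H1 H2 => [|i] H1 H2; case: i' H1 H2 => [|i'] H1 H2 /=; split; try lia.
    * by rewrite /homn /=; apply: Hphi.1.
    * by rewrite homnS.
    * by rewrite homnS.
    * by apply: Hphi.2; rewrite !homnS'.
  + split; first lia. by rewrite -!homnS'; apply: Hphi.1.
Qed.

Lemma foldr_E u s s' : E s s' -> E (foldr step s u) (foldr step s' u).
Proof. by elim: u => [|x u IH] //= H; apply: step_E; apply: IH. Qed.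

Lemma foldr_liftw i X j z : foldr step (i, X, j) (liftw z) = (i, homn i z ++ X, j).
Proof.
elim: z => [|[a b] z IH] /=; first by rewrite homn_nil.
rewrite IH /= catA -homn_cat //.
Qed.

Lemma liftw_invw (z : word T) : invw (liftw z) = liftw (invw z).
Proof.
rewrite /invw /liftw map_rev -!map_comp.
by congr rev; apply: eq_map => -[].
Qed.

Lemma liftw_cat (u v : word T) : liftw (u ++ v) = liftw u ++ liftw v.
Proof. by rewrite /liftw map_cat. Qed.

Lemma cancel_E x s : E (step x (step (invl x) s)) s.
Proof.
case: s => [[i X] j]; case: x => [[a|] b] /=.
- split=> //; apply: homn_pe.
  have -> : [:: (a, ~~ b)] = invw [:: (a, b)] by [].
  rewrite homn_invw catA. exact: (pe_cancel_ctx R [::] X).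
- case: b => /=.
  + split=> //; exact: pe_refl.
  + case: i => [|i] /=; split=> //; try lia; exact: pe_refl.
Qed.

Lemma rel_E r s : r \in hnn_rels R phi -> E (foldr step s r) s.
Proof.
case: s => [[i X] j].
rewrite mem_cat => /orP [/mapP [r0 Hr0 ->]|/mapP [a _ ->]].
- rewrite foldr_liftw; split=> //; apply: homn_pe.
  apply: (pe_trans (v := [::] ++ X)); last exact: pe_refl.
  apply: pe_ctxr; rewrite -(homn_nil i); apply: homn_pe; exact: pe_mem.
  rewrite foldr_cat liftw_invw.
  rewrite foldr_liftw /=; split=> //; apply: homn_pe.
  rewrite homnS' homn_invw catA.
  have -> : homn i.+1 [:: (a, false)] = homn i (phi a) by rewrite -homnS /hom_word /= cats0.
  exact: (pe_cancel_ctx R [::] X).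
Qed.

Lemma nf_pe u v : pres_eq (hnn_rels R phi) u v -> E (nf u) (nf v).
Proof.
elim=> {u v}.
- by move=> u; apply: E_refl.
- by move=> u v _ H; apply: E_sym.
- by move=> u v w _ H1 _ H2; apply: E_trans H2.
- move=> u v x; rewrite /nf !foldr_cat; apply: foldr_E => /=.
  exact: cancel_E.
- move=> u v r Hr; rewrite /nf !foldr_cat; apply: foldr_E; exact: rel_E.
Qed.

End NF.

Section G.
Variables (T : finType) (R : seq (word T)) (phi : T -> word T).

Notation tt := ((None, false) : letter (hgen T)).
Notation ti := ((None, true) : letter (hgen T)).
Notation rels := (hnn_rels R phi).

Definition Yl (a : T) (b : bool) : word (hgen T) := liftw (hom_word phi [:: (a, b)]).
Definition F2 a b : word (hgen T) := [:: ti; (Some a, b); tt] ++ invw (Yl a b).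
Definition F1 a b : word (hgen T) := [:: (Some a, b); tt] ++ invw (Yl a b) ++ [:: ti].

Lemma r_mem a : [:: ti; (Some a, false); tt] ++ invw (liftw (phi a)) \in rels.
Proof. by rewrite mem_cat; apply/orP; right; apply/mapP; exists a; rewrite ?mem_enum. Qed.

Lemma face_F2 a b : face_word R phi (F2 a b).
Proof.
rewrite /F2 /Yl; case: b; rewrite /hom_word /= cats0.
- exists (invw ([:: ti; (Some a, false); tt] ++ invw (liftw (phi a)))), (size (liftw (phi a))).
  split; first by right; rewrite invwK r_mem.
  rewrite invw_cat invwK -liftw_invw invwK rot_size_cat //.
- exists ([:: ti; (Some a, false); tt] ++ invw (liftw (phi a))), 0.
  by split; [left; exact: r_mem| rewrite rot0].
Qed.

Lemma face_rot1 r : face_word R phi r -> face_word R phi (rot 1 r).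
Proof.
move=> [r0 [k [Hr ->]]].
have [Hk|Hk] := leqP (size r0) k.
- by exists r0, 1; split=> //; rewrite (rot_oversize Hk).
- by exists r0; exists (1 + k); split=> //; rewrite rotD.
Qed.

Lemma face_F1 a b : face_word R phi (F1 a b).
Proof.
have -> : F1 a b = rot 1 (F2 a b) by rewrite /F1 /F2 /= rot1_cons -cats1.
exact: face_rot1 (face_F2 a b).
Qed.

Lemma face_pe r : face_word R phi r -> pres_eq rels r [::].
Proof.
move=> [r0 [k [Hr ->]]].
have H0 : pres_eq rels r0 [::].
  case: Hr => Hr; first exact: pe_mem.
  by rewrite -(invwK r0); apply: pe_inv; apply: pe_mem.
rewrite /rot; apply: pe_rot; by rewrite cat_take_drop.
Qed.

Lemma push_up1 a b : pres_eq rels [:: (Some a, b); tt] ([:: tt] ++ Yl a b).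
Proof.
apply: (pe_trans (v := F1 a b ++ [:: tt] ++ Yl a b)); last first.
  by have := pe_ctxr ([:: tt] ++ Yl a b) (face_pe (face_F1 a b)).
rewrite /F1.
apply: (pe_trans (v := [:: (Some a, b); tt] ++ (invw (Yl a b) ++ invw (invw (Yl a b))) ++ [::])).
  by apply: pe_sym; have := pe_cancel_ctx rels [:: (Some a, b); tt] [::] (invw (Yl a b)); rewrite cats0.
rewrite invwK cats0.
apply: pe_sym; have := pe_free rels ([:: (Some a, b); tt] ++ invw (Yl a b)) (Yl a b) ti.
by rewrite -!catA.
Qed.

Lemma push_down1 a b : pres_eq rels [:: ti; (Some a, b)] (Yl a b ++ [:: ti]).
Proof.
apply: (pe_trans (v := F2 a b ++ Yl a b ++ [:: ti])); last first.
  by have := pe_ctxr (Yl a b ++ [:: ti]) (face_pe (face_F2 a b)).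
rewrite /F2.
apply: (pe_trans (v := [:: ti; (Some a, b)] ++ [:: tt; ti] ++ [::])).
  by apply: pe_sym; have := pe_free rels [:: ti; (Some a, b)] [::] tt.
apply: pe_sym.
have := pe_cancel_ctx rels [:: ti; (Some a, b); tt] [:: ti] (invw (Yl a b)).
by rewrite invwK -!catA.
Qed.

Lemma push_up_w Z : pres_eq rels (liftw Z ++ [:: tt]) ([:: tt] ++ liftw (hom_word phi Z)).
Proof.
elim: Z => [|[a b] Z IH]; first exact: pe_refl.
apply: (pe_trans (v := [:: (Some a, b)] ++ [:: tt] ++ liftw (hom_word phi Z))).
  by have := pe_ctxl [:: (Some a, b)] IH.
have -> : hom_word phi ((a, b) :: Z) = hom_word phi [:: (a, b)] ++ hom_word phi Z.
  by rewrite -hom_cat.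
rewrite liftw_cat !catA; exact: (pe_ctxr _ (push_up1 a b)).
Qed.

Lemma push_up_n n Z : pres_eq rels (liftw Z ++ tpow n false) (tpow n false ++ liftw (homn phi n Z)).
Proof.
elim: n Z => [|n IH] Z; first by rewrite cats0; apply: pe_refl.
rewrite /tpow /=.
apply: (pe_trans (v := [:: tt] ++ liftw (hom_word phi Z) ++ tpow n false)).
  by have := pe_ctxr (tpow n false) (push_up_w Z); rewrite -!catA.
rewrite homnS' -(homnS phi n Z).
by have := pe_ctxl [:: tt] (IH (hom_word phi Z)).
Qed.

Lemma push_down_w Z : pres_eq rels ([:: ti] ++ liftw Z) (liftw (hom_word phi Z) ++ [:: ti]).
Proof.
elim: Z => [|[a b] Z IH]; first exact: pe_refl.
have -> : hom_word phi ((a, b) :: Z) = hom_word phi [:: (a, b)] ++ hom_word phi Z.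
  by rewrite -hom_cat.
apply: (pe_trans (v := (Yl a b ++ [:: ti]) ++ liftw Z)).
  by have := pe_ctxr (liftw Z) (push_down1 a b).
rewrite liftw_cat -!catA; apply: pe_ctxl; exact: IH.
Qed.

Lemma push_down_n n Z : pres_eq rels (tpow n true ++ liftw Z) (liftw (homn phi n Z) ++ tpow n true).
Proof.
elim: n Z => [|n IH] Z; first by rewrite cats0; apply: pe_refl.
rewrite /tpow /=.
apply: (pe_trans (v := [:: ti] ++ liftw (homn phi n Z) ++ tpow n true)).
  by have := pe_ctxl [:: ti] (IH Z).
by have := pe_ctxr (tpow n true) (push_down_w (homn phi n Z)); rewrite -!catA.
Qed.

End G.

Lemma ht_ctx (T : finType) (R : seq (word T)) (phi : T -> word T)
  (S : word (hgen T) -> Prop) g pre post u v :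
  htpy R phi S (g ++ pre) u v -> htpy R phi S g (pre ++ u ++ post) (pre ++ v ++ post).
Proof.
elim=> {u v}.
- by move=> w; apply: ht_refl.
- move=> w1 w2 [].
  + move=> u v x H.
    have := ht_step (@hs_back _ R phi S g (pre ++ u) (v ++ post) x _).
    rewrite -!catA; apply; by rewrite -!catA in H *.
  + move=> u v r Hr H.
    have := ht_step (@hs_face _ R phi S g (pre ++ u) (v ++ post) r Hr _).
    rewrite -!catA; apply=> k Hk; have := H k Hk; by rewrite -!catA.
- by move=> w1 w2 _ H; apply: ht_sym.
- by move=> w1 w2 w3 _ H1 _ H2; apply: ht_trans H2.
Qed.

Section H.
Variables (T : finType) (R : seq (word T)) (phi : T -> word T) (M N : nat).

Notation tt := ((None, false) : letter (hgen T)).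
Notation ti := ((None, true) : letter (hgen T)).
Notation rels := (hnn_rels R phi).
Notation S := (in_S R phi M N).
Notation htp := (htpy R phi S).

Definition Good (p : word (hgen T)) := ~ S p.

Lemma Good_geq p q : pres_eq rels p q -> Good p -> Good q.
Proof. move=> H Gp [a [m [Hm Hq]]]; apply: Gp; exists a, m; split=> //; exact: pe_trans H Hq. Qed.

Lemma Good_A p z : Good p -> Good (p ++ liftw z).
Proof.
move=> Gp [a [m [Hm H]]]; apply: Gp; exists (a ++ homn phi m (invw z)), m; split=> //.
rewrite /Defs.geq in H *.
apply: (pe_trans (v := (p ++ liftw z) ++ invw (liftw z))).
  apply: pe_sym; have := pe_cancel_ctx rels p [::] (liftw z); by rewrite !cats0 catA.
apply: (pe_trans (pe_ctxr _ H)).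
rewrite liftw_invw liftw_cat -!catA; apply: pe_ctxl; apply: pe_ctxl.
exact: push_down_n.
Qed.

Lemma Good_A_inv p z : Good (p ++ liftw z) -> Good p.
Proof.
move=> H; apply: (Good_geq (p := (p ++ liftw z) ++ liftw (invw z))); last exact: Good_A.
rewrite -liftw_invw -catA; have := pe_cancel_ctx rels p [::] (liftw z); by rewrite !cats0.
Qed.

Definition Verts q w := forall k, k <= size w -> Good (q ++ take k w).

Lemma Verts_cat q u v : Verts q u -> Verts (q ++ u) v -> Verts q (u ++ v).
Proof.
move=> Hu Hv k Hk; rewrite take_cat; case: ifP => H; first by apply: Hu; exact: ltnW.
rewrite catA; apply: Hv; rewrite size_cat in Hk; lia.
Qed.

Lemma Verts_liftw q z : Good q -> Verts q (liftw z).
Proof. by move=> Gq k _; rewrite /liftw -map_take; apply: Good_A. Qed.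

Lemma Verts_1 q x : Good q -> Good (q ++ [:: x]) -> Verts q [:: x].
Proof. by move=> G0 G1 [|[|k]] //= _; rewrite cats0. Qed.

Lemma cancel_htpy q y : (forall k, 0 < k -> k <= size y -> Good (q ++ take k y)) ->
  htp q (y ++ invw y) [::].
Proof.
elim: y q => [|x y IH] q H; first exact: ht_refl.
rewrite invw_cons cat_cons catA.
apply: (ht_trans (w2 := [:: x] ++ [::] ++ [:: invl x])).
  apply: (@ht_ctx T R phi S q [:: x] [:: invl x]); apply: IH => k Hk Hk'; rewrite -catA; exact: (H k.+1).
apply: ht_step; apply: (@hs_back _ R phi S q [::] [::] x); have := H 1 erefl erefl; by rewrite /= take0.
Qed.

Lemma pe_htpy q u v : pres_eq R u v -> Good q -> htp q (liftw u) (liftw v).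
Proof.
move=> H Gq; elim: H => {u v}.
- by move=> u; apply: ht_refl.
- by move=> u v _ H; apply: ht_sym.
- by move=> u v w _ H1 _ H2; apply: ht_trans H2.
- move=> u v x; rewrite !liftw_cat; apply: ht_step.
  apply: (@hs_back _ R phi S q (liftw u) (liftw v) (Some x.1, x.2)).
  have := Good_A (z := u ++ [:: x]) Gq; by rewrite liftw_cat.
- move=> u v r Hr; rewrite !liftw_cat; apply: ht_step.
  apply: (@hs_face _ R phi S q (liftw u) (liftw v) (liftw r)).
    exists (liftw r), 0; split; last by rewrite rot0.
    by left; rewrite mem_cat; apply/orP; left; apply: map_f.
  move=> k _; have := Good_A (z := u ++ take k r) Gq.
  by rewrite liftw_cat /liftw map_take.
Qed.

Lemma Good_up q a b : Good (q ++ [:: tt]) -> Good (q ++ [:: (Some a, b); tt]).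
Proof.
move=> H; apply: (Good_geq (p := q ++ [:: tt] ++ Yl phi a b)).
  exact: (pe_ctxl q (pe_sym (push_up1 R phi a b))).
rewrite catA; exact: Good_A.
Qed.

Lemma Good_dn q a b : Good q -> Good (q ++ [:: ti; (Some a, b); tt]).
Proof.
move=> H; apply: (Good_geq (p := q ++ Yl phi a b)); last exact: Good_A.
apply: pe_ctxl; apply: pe_sym.
apply: (pe_trans (v := (Yl phi a b ++ [:: ti]) ++ [:: tt])).
  exact: (pe_ctxr [:: tt] (push_down1 R phi a b)).
have := pe_free rels (Yl phi a b) [::] ti; by rewrite !cats0 -catA.
Qed.

End H.

Section H2.
Variables (T : finType) (R : seq (word T)) (phi : T -> word T) (M N : nat).

Notation tt := ((None, false) : letter (hgen T)).
Notation ti := ((None, true) : letter (hgen T)).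
Notation rels := (hnn_rels R phi).
Notation S := (in_S R phi M N).
Notation htp := (htpy R phi S).
Notation G := (Good R phi M N).
Notation V := (Verts R phi M N).

Lemma Verts_F1 q a b : G q -> G (q ++ [:: tt]) -> V q (F1 phi a b).
Proof.
move=> G0 G1.
have Gl : G (q ++ [:: (Some a, b)]) := Good_A (z := [:: (a, b)]) G0.
have Glt : G (q ++ [:: (Some a, b); tt]) := Good_up G1.
rewrite /F1.
apply: (Verts_cat (u := [:: (Some a, b)])); first exact: Verts_1.
apply: (Verts_cat (u := [:: tt])); first by apply: Verts_1 => //; rewrite -catA.
apply: Verts_cat.
  rewrite /Yl liftw_invw; apply: Verts_liftw; by rewrite -catA.
apply: Verts_1.
  rewrite /Yl liftw_invw; have := Good_A (z := invw (hom_word phi [:: (a, b)])) Glt.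
  by rewrite -!catA.
apply: (Good_geq (p := q)) => //; rewrite -!catA.
have := pe_ctxl q (pe_sym (face_pe (face_F1 R phi a b))); by rewrite cats0.
Qed.

Lemma ht_push_up1 q a b : G q -> G (q ++ [:: tt]) ->
  htp q [:: (Some a, b); tt] ([:: tt] ++ Yl phi a b).
Proof.
move=> G0 G1.
have HV := Verts_F1 (a := a) (b := b) G0 G1.
have Glt : G (q ++ [:: (Some a, b); tt]) := Good_up G1.
set Y := Yl phi a b.
have H1 : htp q (F1 phi a b ++ [:: tt] ++ Y) ([:: tt] ++ Y).
  apply: ht_step; apply: (@hs_face _ R phi S q [::] ([:: tt] ++ Y) (F1 phi a b) (face_F1 R phi a b)).
  exact: HV.
have H2 : htp q (F1 phi a b ++ [:: tt] ++ Y) (([:: (Some a, b); tt] ++ invw Y) ++ Y).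
  have -> : F1 phi a b ++ [:: tt] ++ Y = ([:: (Some a, b); tt] ++ invw Y) ++ [:: ti; tt] ++ Y.
    by rewrite /F1 -!catA.
  apply: ht_step; apply: (@hs_back _ R phi S q _ Y ti).
  have := HV (size (F1 phi a b)) (leqnn _); by rewrite take_size /F1 -!catA.
have H3 : htp q (([:: (Some a, b); tt] ++ invw Y) ++ Y) [:: (Some a, b); tt].
  have := @ht_ctx _ R phi S q [:: (Some a, b); tt] [::] (invw Y ++ invw (invw Y)) [::]
            (cancel_htpy (q := q ++ [:: (Some a, b); tt]) (y := invw Y) _).
  rewrite invwK cats0 -catA; apply.
  move=> k _ _; rewrite /Y /Yl liftw_invw /liftw -map_take; exact: Good_A.
exact: ht_trans (ht_sym H3) (ht_trans (ht_sym H2) H1).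
Qed.

Lemma Verts_F2 q a b : G q -> G (q ++ [:: ti]) -> V q (F2 phi a b).
Proof.
move=> G0 G1.
have Gl : G (q ++ [:: ti; (Some a, b)]) by have := Good_A (z := [:: (a, b)]) G1; rewrite -catA.
have Glt : G (q ++ [:: ti; (Some a, b); tt]) := Good_dn (a := a) (b := b) G0.
rewrite /F2.
apply: (Verts_cat (u := [:: ti])); first exact: Verts_1.
apply: (Verts_cat (u := [:: (Some a, b)])); first by apply: Verts_1 => //; rewrite -catA.
apply: (Verts_cat (u := [:: tt])); first by apply: Verts_1; rewrite -!catA.
rewrite /Yl liftw_invw; apply: Verts_liftw; by rewrite -!catA.
Qed.

Lemma ht_push_down1 q a b : G q -> G (q ++ [:: ti]) ->
  htp q [:: ti; (Some a, b)] (Yl phi a b ++ [:: ti]).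
Proof.
move=> G0 G1.
have HV := Verts_F2 (a := a) (b := b) G0 G1.
have Glt : G (q ++ [:: ti; (Some a, b); tt]) := Good_dn (a := a) (b := b) G0.
set Y := Yl phi a b.
have H1 : htp q ([:: ti; (Some a, b)] ++ [:: tt; ti] ++ [::]) ([:: ti; (Some a, b)] ++ [::]).
  apply: ht_step; apply: (@hs_back _ R phi S q _ [::] tt); exact: Glt.
have H2 : htp q ([:: ti; (Some a, b); tt] ++ (invw Y ++ invw (invw Y)) ++ [:: ti])
                ([:: ti; (Some a, b); tt] ++ [::] ++ [:: ti]).
  apply: ht_ctx; apply: cancel_htpy.
  move=> k _ _; rewrite /Y /Yl liftw_invw /liftw -map_take; exact: Good_A.
have H3 : htp q (F2 phi a b ++ Y ++ [:: ti]) (Y ++ [:: ti]).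
  apply: ht_step; apply: (@hs_face _ R phi S q [::] (Y ++ [:: ti]) (F2 phi a b) (face_F2 R phi a b)).
  exact: HV.
rewrite invwK in H2.
have E2 : [:: ti; (Some a, b); tt] ++ (invw Y ++ Y) ++ [:: ti] = F2 phi a b ++ Y ++ [:: ti].
  by rewrite /F2 -!catA.
rewrite E2 in H2.
rewrite cats0 in H1.
exact: ht_trans (ht_sym H1) (ht_trans (ht_sym H2) H3).
Qed.

End H2.

Section H3.
Variables (T : finType) (R : seq (word T)) (phi : T -> word T) (M N : nat).

Notation tt := ((None, false) : letter (hgen T)).
Notation ti := ((None, true) : letter (hgen T)).
Notation rels := (hnn_rels R phi).
Notation S := (in_S R phi M N).
Notation htp := (htpy R phi S).
Notation G := (Good R phi M N).
Notation V := (Verts R phi M N).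

Lemma hom_cons (a : T) b Z : hom_word phi ((a, b) :: Z) = hom_word phi [:: (a, b)] ++ hom_word phi Z.
Proof. by rewrite -hom_cat. Qed.

Lemma ht_ctxr g post u v : htp g u v -> htp g (u ++ post) (v ++ post).
Proof. move=> H; apply: (@ht_ctx _ R phi S g [::] post); by rewrite cats0. Qed.

Lemma ht_ctxl g pre u v : htp (g ++ pre) u v -> htp g (pre ++ u) (pre ++ v).
Proof. move=> H; have := @ht_ctx _ R phi S g pre [::] _ _ H; by rewrite !cats0. Qed.

Lemma ht_push_up_w q Z : G q -> G (q ++ [:: tt]) ->
  htp q (liftw Z ++ [:: tt]) ([:: tt] ++ liftw (hom_word phi Z)).
Proof.
elim: Z q => [|[a b] Z IH] q G0 G1; first exact: ht_refl.
have Gl : G (q ++ [:: (Some a, b)]) := Good_A (z := [:: (a, b)]) G0.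
have Glt : G ((q ++ [:: (Some a, b)]) ++ [:: tt]) by rewrite -catA; exact: Good_up G1.
have H1 := @ht_ctx _ R phi S q [:: (Some a, b)] [::] _ _ (IH _ Gl Glt).
rewrite !cats0 in H1.
apply: (ht_trans H1).
have H2 := ht_ctxr (liftw (hom_word phi Z)) (ht_push_up1 a b G0 G1).
rewrite hom_cons liftw_cat.
exact: H2.
Qed.

Lemma ht_push_up_n q n Z : (forall k, k <= n -> G (q ++ tpow k false)) ->
  htp q (liftw Z ++ tpow n false) (tpow n false ++ liftw (homn phi n Z)).
Proof.
elim: n q Z => [|n IH] q Z H; first by rewrite cats0; exact: ht_refl.
have G0 : G q by have := H 0 erefl; rewrite cats0.
have G1 : G (q ++ [:: tt]) by exact: (H 1 erefl).
have H1 := ht_ctxr (tpow n false) (ht_push_up_w Z G0 G1).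
rewrite -catA in H1.
apply: (ht_trans H1).
have H2 := @ht_ctx _ R phi S q [:: tt] [::] _ _ (IH (q ++ [:: tt]) (hom_word phi Z) _).
rewrite !cats0 homnS in H2; apply: H2.
move=> k Hk; rewrite -catA; exact: (H k.+1).
Qed.

Lemma ht_push_down_w q Z : G q -> G (q ++ [:: ti]) ->
  htp q ([:: ti] ++ liftw Z) (liftw (hom_word phi Z) ++ [:: ti]).
Proof.
elim: Z q => [|[a b] Z IH] q G0 G1; first exact: ht_refl.
have H1 := ht_ctxr (liftw Z) (ht_push_down1 a b G0 G1).
apply: (ht_trans H1).
have GY : G (q ++ Yl phi a b) := Good_A G0.
have GYt : G ((q ++ Yl phi a b) ++ [:: ti]).
  apply: (Good_geq (p := q ++ [:: ti; (Some a, b)])).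
    rewrite -catA; exact: (pe_ctxl q (push_down1 R phi a b)).
  have := Good_A (z := [:: (a, b)]) G1; by rewrite -catA.
have H2 := @ht_ctx _ R phi S q (Yl phi a b) [::] _ _ (IH _ GY GYt).
rewrite !cats0 in H2.
rewrite hom_cons liftw_cat -!catA.
exact: H2.
Qed.

End H3.

Section H4.
Variables (T : finType) (R : seq (word T)) (phi : T -> word T) (M N : nat).

Notation tt := ((None, false) : letter (hgen T)).
Notation ti := ((None, true) : letter (hgen T)).
Notation rels := (hnn_rels R phi).
Notation S := (in_S R phi M N).
Notation htp := (htpy R phi S).
Notation G := (Good R phi M N).
Notation V := (Verts R phi M N).

Definition nfw (s : nat * word T * nat) : word (hgen T) :=
  let: (i, X, j) := s in tpow i false ++ liftw X ++ tpow j true.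

Definition NG q (s : nat * word T * nat) : Prop :=
  let: (i, X, j) := s in
  (forall k, k <= i -> G (q ++ tpow k false)) /\
  (forall k, k <= j -> G (q ++ tpow i false ++ liftw X ++ tpow k true)).

Lemma nf_htpy w q : V q w -> htp q w (nfw (nf phi w)) /\ NG q (nf phi w).
Proof.
elim: w q => [|x w IH] q HV.
  have G0 : G q by have := HV 0 erefl; rewrite cats0.
  split; first exact: ht_refl.
  by split=> k Hk; case: k Hk => // _; rewrite /= ?cats0.
have G0 : G q by have := HV 0 erefl; rewrite cats0.
have G1 : G (q ++ [:: x]) by have := HV 1 erefl; rewrite /= take0.
have HV' : V (q ++ [:: x]) w by move=> k Hk; rewrite -catA; exact: (HV k.+1 Hk).
have [Hh Hn] := IH _ HV'.
have Hc := ht_ctxl (pre := [:: x]) Hh.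
have -> : nf phi (x :: w) = step phi x (nf phi w) by [].
move: Hh Hn Hc; case: (nf phi w) => [[i X] j] Hh [Hn1 Hn2] Hc.
case: x G1 HV HV' Hh Hn1 Hn2 Hc => [[a|] b] G1 HV HV' Hh Hn1 Hn2 Hc.
-
  have Gk : forall k, k <= i -> G (q ++ tpow k false).
    move=> k Hk; apply: (Good_A_inv (z := homn phi k [:: (a, b)])).
    apply: (Good_geq (p := (q ++ [:: (Some a, b)]) ++ tpow k false)); last exact: Hn1.
    rewrite -!catA; apply: pe_ctxl; exact: (push_up_n R phi k [:: (a, b)]).
  rewrite /=; split.
    apply: (ht_trans Hc).
    have := ht_ctxr (liftw X ++ tpow j true) (ht_push_up_n [:: (a, b)] Gk).
    by rewrite liftw_cat -!catA.
  split=> // k Hk.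
  apply: (Good_geq (p := (q ++ [:: (Some a, b)]) ++ tpow i false ++ liftw X ++ tpow k true)); last exact: Hn2.
  rewrite liftw_cat -!catA; apply: pe_ctxl.
  have := pe_ctxr (liftw X ++ tpow k true) (push_up_n R phi i [:: (a, b)]); by rewrite -!catA.
- case: b G1 HV HV' Hh Hn1 Hn2 Hc => G1 HV HV' Hh Hn1 Hn2 Hc.
  +
    case: i Hh Hn1 Hn2 Hc => [|i] Hh Hn1 Hn2 Hc /=.
    * split.
        apply: (ht_trans Hc).
        have := ht_ctxr (tpow j true) (ht_push_down_w X G0 G1); by rewrite -!catA.
      split; first by case=> // _; rewrite cats0.
      case=> [|k] Hk; first by rewrite cats0; exact: Good_A.
      apply: (Good_geq (p := (q ++ [:: ti]) ++ [::] ++ liftw X ++ tpow k true)); last exact: Hn2.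
      rewrite -!catA; apply: pe_ctxl.
      have := pe_ctxr (tpow k true) (push_down_w R phi X); by rewrite -!catA.
    * split.
        apply: (ht_trans Hc); apply: ht_step.
        exact: (@hs_back _ R phi S q [::] (nfw (i, X, j)) ti G1).
      split=> k Hk.
        apply: (Good_geq (p := (q ++ [:: ti]) ++ tpow k.+1 false)); last exact: Hn1.
        rewrite -catA; exact: (pe_free rels q (tpow k false) ti).
      apply: (Good_geq (p := (q ++ [:: ti]) ++ tpow i.+1 false ++ liftw X ++ tpow k true)); last exact: Hn2.
      rewrite -catA; exact: (pe_free rels q (tpow i false ++ liftw X ++ tpow k true) ti).
  +
    split; first exact: Hc.
    split=> [[|k] Hk|k Hk]; first by rewrite cats0.
      have := Hn1 k Hk; by rewrite -catA.
    have := Hn2 k Hk; by rewrite -catA.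
Qed.

Lemma tpow_inv i : tpow i true = invw (tpow i false) :> word (hgen T).
Proof. by rewrite /invw /tpow map_nseq rev_nseq. Qed.

End H4.

Theorem theorem5p11 (T : finType) (R : seq (word T)) (phi : T -> word T)
  (Hphi : induces_mono R phi) (M N : nat) (g w : word (hgen T)) :
  loop_avoiding R phi (in_S R phi M N) g w ->
  htpy R phi (in_S R phi M N) g w [::].
Proof.
move=> [Hg HV].
have [Hh Hn] := nf_htpy (M := M) (N := N) (HV : Verts R phi M N g w).
have HE : E R phi (nf phi w) (0, [::], 0).
  have E1 := nf_pe Hphi Hg.
  have E2 := foldr_E Hphi (invw g) E1.
  rewrite -!foldr_cat -/(nf phi _) -/(nf phi _) in E2.
  have E3 : E R phi (nf phi (invw g ++ g ++ w)) (nf phi w).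
    apply: nf_pe => //; have := pe_cancel_ctx (hnn_rels R phi) [::] w (invw g).
    by rewrite invwK -catA.
  have E4 : E R phi (nf phi (invw g ++ g)) (nf phi [::]).
    apply: nf_pe => //; exact: pe_cancel'.
  have := E_trans Hphi (E_sym E3) (E_trans Hphi E2 E4); by [].
move: Hh Hn HE; case: (nf phi w) => [[i X] j] Hh [Hn1 Hn2] [Hij HX].
rewrite homn_nil /= in HX.
have Hji : j = i by lia. subst j.
apply: (ht_trans Hh).
have Gi := Hn1 i (leqnn i).
have H1 := ht_ctxl (pre := tpow i false) (ht_ctxr (tpow i true) (pe_htpy HX Gi)).
apply: (ht_trans H1).
rewrite /= tpow_inv; apply: cancel_htpy => k Hk Hk'.
rewrite /tpow take_nseq; last by rewrite size_nseq in Hk'.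
apply: Hn1; by rewrite size_nseq in Hk'.
Qed.
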